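(* Let $\mathcal{Z}=\mathcal{X}\times\mathcal{Y}$ with $\mathcal{X}\subseteq\mathbb{R}^d$, let $\mathcal{D}_S$ (source) and $\mathcal{D}_T$ (target) be probability distributions on $\mathcal{Z}$, let $S=\{\boldsymbol{z}_i\}_{i=1}^n$ be a training set of $n$ i.i.d. samples from $\mathcal{D}_S$, and let $\hat{\mathcal{D}}_T$ be an empirical sample of size $n$ drawn i.i.d. from $\mathcal{D}_T$. Assume the loss satisfies $0\le \ell_{\boldsymbol{\theta}}(\boldsymbol{z})\le M$ for all $\boldsymbol{z}\in\mathcal{Z}$. Then for every $\delta\in(0,1)$, with probability at least $1-\delta$ (over the choice of the samples), for every model $f_{\boldsymbol{\theta}}$ trained on $S$ that is $(K,\epsilon(S))$-robust with partition $\{C_i\}_{i=1}^K$, we have $$\mathcal{L}_T(f_{\boldsymbol{\theta}})\le \widehat{\mathcal{L}}_S(f_{\boldsymbol{\theta}})+M\, d_{(\epsilon,K)}(S,\hat{\mathcal{D}}_T)+2\epsilon(S)+3M\sqrt{\frac{2K\ln 2+2\ln(2/\delta)}{n}},$$ where $d_{(\epsilon,K)}(S,\hat{\mathcal{D}}_T):=\sum_{i=1}^K\left|\frac{n_i(S)}{n}-\frac{n_i(\hat{\mathcal{D}}_T)}{n}\right|$ and $n_i(S)$, $n_i(\hat{\mathcal{D}}_T)$ denote the numbers of samples of $S$ and of $\hat{\mathcal{D}}_T$, respectively, that fall into $C_i$.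
   Context: A model $f_{\boldsymbol{\theta}}$ with parameters $\boldsymbol{\theta}$ maps inputs $\boldsymbol{x}\in\mathcal{X}$ to $\mathbb{R}$; for $\boldsymbol{z}=(\boldsymbol{x},y)$ write $\ell_{\boldsymbol{\theta}}(\boldsymbol{z})=\ell(f(\boldsymbol{\theta},\boldsymbol{x}),y)$ for a loss $\ell:\mathbb{R}\times\mathbb{R}\to\mathbb{R}_+$. Expected risks: $\mathcal{L}_S(f_{\boldsymbol{\theta}})=\mathbb{E}_{\boldsymbol{z}\sim\mathcal{D}_S}[\ell_{\boldsymbol{\theta}}(\boldsymbol{z})]$, $\mathcal{L}_T(f_{\boldsymbol{\theta}})=\mathbb{E}_{\boldsymbol{z}\sim\mathcal{D}_T}[\ell_{\boldsymbol{\theta}}(\boldsymbol{z})]$; empirical source risk $\widehat{\mathcal{L}}_S(f_{\boldsymbol{\theta}})=\frac1n\sum_{\boldsymbol{z}_i\in S}\ell_{\boldsymbol{\theta}}(\boldsymbol{z}_i)$. Robustness (Xu–Mannor): a model $f_{\boldsymbol{\theta}}$ trained on $S$ is $(K,\epsilon(S))$-robust, for $K\in\mathbb{N}$, if $\mathcal{Z}$ can be partitioned into $K$ disjoint sets $\{C_i\}_{i=1}^K$ such that for all $\boldsymbol{s}\in S$ and $\boldsymbol{z}\in\mathcal{Z}$ and all $i\in[K]$: $\boldsymbol{s},\boldsymbol{z}\in C_i\Rightarrow|\ell_{\boldsymbol{\theta}}(\boldsymbol{s})-\ell_{\boldsymbol{\theta}}(\boldsymbol{z})|\le\epsilon(S)$.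 *)

(* Defs.v *)
From HB Require Import structures.
From mathcomp Require Import all_boot all_order all_algebra.
From mathcomp Require Import all_classical all_reals all_analysis.
Set Implicit Arguments. Unset Strict Implicit. Unset Printing Implicit Defensive.
Import Order.TTheory GRing.Theory Num.Theory.
Import numFieldNormedType.Exports.
Local Open Scope classical_set_scope.
Local Open Scope ring_scope.

(* Mutual independence of a finite family of random variables X i : Omega -> Z
   (product rule for every choice of measurable sets B i; for a finite
   family this covers all finite subfamilies by taking B j = setT). *)
Definition mutually_independent {d dZ : measure_display} {R : realType}
  {Omega : measurableType d} {Z : measurableType dZ}
  (P : probability Omega R) (I : finType) (X : I -> Omega -> Z) : Prop :=
  (forall i, measurable_fun setT (X i)) /\
  forall B : I -> set Z, (forall i, measurable (B i)) ->
    P (\bigcap_(i in [set: I]) (X i @^-1` B i)) =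
    (\prod_(i : I) P (X i @^-1` B i))%E.

Definition has_distribution {d dZ : measure_display} {R : realType}
  {Omega : measurableType d} {Z : measurableType dZ}
  (P : probability Omega R) (X : Omega -> Z) (D : probability Z R) : Prop :=
  forall B, measurable B -> P (X @^-1` B) = D B.

Definition is_partition {T : Type} (K : nat) (C : 'I_K -> set T) : Prop :=
  (forall i j, i != j -> C i `&` C j = set0) /\
  \bigcup_(i in [set: 'I_K]) C i = [set: T].

Definition robust_wrt {T : Type} {R : realType} (n K : nat) (C : 'I_K -> set T)
  (S : 'I_n -> T) (lth : T -> R) (eps : R) : Prop :=
  is_partition C /\
  forall (j : 'I_n) (z : T) (i : 'I_K), C i (S j) -> C i z ->
    `| lth (S j) - lth z | <= eps.

Definition ncount {T : Type} (n : nat) (S : 'I_n -> T) (A : set T) : nat :=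
  #|[set j : 'I_n | S j \in A]|.

Definition dist_eK {T : Type} {R : realType} (n K : nat) (C : 'I_K -> set T)
  (S Tt : 'I_n -> T) : R :=
  \sum_(i < K) `| (ncount S (C i))%:R / n%:R - (ncount Tt (C i))%:R / n%:R |.

Definition emp_risk {T : Type} {R : realType} (n : nat) (lth : T -> R)
  (S : 'I_n -> T) : R := (\sum_(j < n) lth (S j)) / n%:R.

(* Main.v *)
Require Import Defs.
From HB Require Import structures.
From mathcomp Require Import all_boot all_order all_algebra.
From mathcomp Require Import all_classical all_reals all_analysis.
From mathcomp Require Import ring lra.
Import Order.TTheory GRing.Theory Num.Theory.
Import numFieldNormedType.Exports.
Local Open Scope classical_set_scope.
Local Open Scope ring_scope.
Lemma measure_bigsetU_le d (T : measurableType d) (R : realType)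
  (mu : {measure set T -> \bar R}) (I : Type) (r : seq I) (p : pred I)
  (F : I -> set T) : (forall i, measurable (F i)) ->
  (mu (\big[setU/set0]_(i <- r | p i) F i) <= \sum_(i <- r | p i) mu (F i))%E.
Proof.
move=> mF; elim: r => [|i r IH]; first by rewrite !big_nil measure0.
rewrite !big_cons; case: (p i) => //.
apply: le_trans (measureU2 _ _ _) _ => //.
  exact: bigsetU_measurable.
exact: leeD2l.
Qed.

Lemma in_bigsetU (T : Type) (I : eqType) (r : seq I) (p : pred I) (F : I -> set T) x :
  (\big[setU/set0]_(i <- r | p i) F i) x <-> exists2 i, (i \in r) && p i & F i x.
Proof.
elim: r => [|i r IH]; first by rewrite big_nil; split => // -[].
rewrite big_cons; case: ifP => pi.
  split.
    case=> [Fx|/IH [k /andP[kr pk] Fk]]; first by exists i; rewrite ?mem_head ?pi.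
    by exists k => //; rewrite in_cons kr orbT pk.
  case=> k /andP[]; rewrite in_cons => /orP[/eqP ->|kr] pk Fk; first by left.
  by right; apply/IH; exists k => //; rewrite kr pk.
split.
  by move=> /IH [k /andP[kr pk] Fk]; exists k => //; rewrite in_cons kr orbT pk.
case=> k /andP[]; rewrite in_cons => /orP[/eqP ->|kr] pk Fk; first by rewrite pk in pi.
by apply/IH; exists k => //; rewrite kr pk.
Qed.

Lemma expR_le_quad (R : realType) (s : R) : 0 <= s <= 1/3 -> expR s <= 1 + s + s ^+ 2.
Proof.
case/andP=> s0 s1.
have h := expR_ge1Dx (- (s / 2)).
have hpos : 0 < 1 - s / 2 by lra.
set y := expR (- (s / 2)) in h.
have he : expR s * y ^+ 2 = 1.
  rewrite /y -expRM_natl -expRD.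
  have -> : s + 2%:R * - (s / 2) = 0 by lra.
  by rewrite expR0.
have Ep := expR_gt0 s.
have h2 : (1 - s/2) ^+ 2 <= y ^+ 2.
  nra.
have h3 : expR s * (1 - s/2) ^+ 2 <= 1 by rewrite -[leRHS]he ler_wpM2l// ltW.
have h4 : 1 <= (1 + s + s ^+ 2) * (1 - s/2) ^+ 2.
  have -> : (1 + s + s ^+ 2) * (1 - s/2) ^+ 2 = 1 + s^+2 / 4 * (1 - 3 * s + s ^+ 2) by field.
  have : 0 <= s ^+ 2 / 4 * (1 - 3 * s + s ^+ 2).
    apply: mulr_ge0; first by apply: mulr_ge0 => //; rewrite sqr_ge0.
    nra.
  lra.
have hq : 0 < (1 - s/2) ^+ 2 by rewrite exprn_gt0.
rewrite -(ler_pM2r hq); lra.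
Qed.
Lemma prob_fine d (T : measurableType d) (R : realType) (P : probability T R) (A : set T) :
  measurable A -> P A = (fine (P A))%:E /\ 0 <= fine (P A) <= 1.
Proof.
move=> mA.
have hf : P A \is a fin_num by apply: fin_num_measure.
have e := fineK hf.
split=> //.
have h0 : (0 <= fine (P A)) by rewrite -lee_fin e.
have h1 : fine (P A) <= 1 by rewrite -lee_fin e; exact: probability_le1.
by rewrite h0 h1.
Qed.
Lemma card_cset n (b : 'I_n -> bool) : #|[set j | b j]| = #|[pred j | b j]|.
Proof. apply: eq_card => j; rewrite !inE /=. by apply/idP/idP; rewrite inE. Qed.
Lemma card_cset2 {T : Type} n (S : 'I_n -> T) (A : set T) : #|[set j | S j \in A]| = #|[pred j | S j \in A]|.
Proof. exact: card_cset. Qed.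
Definition atom {dO dZ : measure_display} {Omega : measurableType dO} {Z : measurableType dZ}
  {n : nat} (T : 'I_n -> Omega -> Z) (B : set Z) (b : {ffun 'I_n -> bool}) : set Omega :=
  \bigcap_(j in [set: 'I_n]) (T j @^-1` (if b j then B else ~` B)).

Definition bad {dO dZ : measure_display} {Omega : measurableType dO} {Z : measurableType dZ}
  {R : realType} {n : nat} (T : 'I_n -> Omega -> Z) (B : set Z) (thr : R) : set Omega :=
  \big[setU/set0]_(b : {ffun 'I_n -> bool} | thr <= (#|[set j | b j]|)%:R) atom T B b.

Lemma atom_measurable {dO dZ : measure_display} {Omega : measurableType dO} {Z : measurableType dZ}
  {n : nat} (T : 'I_n -> Omega -> Z) (B : set Z) b :
  (forall j, measurable_fun setT (T j)) -> measurable B -> measurable (atom T B b).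
Proof.
move=> hT mB; apply: fin_bigcap_measurable; first exact: finite_finset.
move=> j _; rewrite -[_ @^-1` _]setTI; apply: (hT j) => //.
by case: (b j) => //; exact: measurableC.
Qed.

Lemma bad_measurable {dO dZ : measure_display} {Omega : measurableType dO} {Z : measurableType dZ}
  {R : realType} {n : nat} (T : 'I_n -> Omega -> Z) (B : set Z) (thr : R) :
  (forall j, measurable_fun setT (T j)) -> measurable B -> measurable (bad T B thr).
Proof.
move=> hT mB; apply: bigsetU_measurable => b _; exact: atom_measurable.
Qed.

Lemma in_bad {dO dZ : measure_display} {Omega : measurableType dO} {Z : measurableType dZ}
  {R : realType} {n : nat} (T : 'I_n -> Omega -> Z) (B : set Z) (thr : R) w :
  thr <= (#|[set j | T j w \in B]|)%:R -> bad T B thr w.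
Proof.
move=> h; apply/in_bigsetU; exists [ffun j => T j w \in B].
  rewrite mem_index_enum /= !card_cset; rewrite card_cset2 in h.
  by rewrite (eq_card (B := [pred j | T j w \in B])) // => j; rewrite !inE ffunE.
move=> j _ /=; rewrite ffunE; case: ifP => //.
  exact: set_mem.
by move=> /negbT h2 Bx; apply: (negP h2); exact: mem_set.
Qed.
Lemma prod_const_ord (R : comPzRingType) n (c : R) : \prod_(i < n) c = c ^+ n.
Proof. by elim: n => [|n IH]; rewrite ?big_ord0 ?expr0 // big_ord_recr IH exprSr. Qed.

Lemma bad_prob {dO dZ : measure_display} {Omega : measurableType dO} {Z : measurableType dZ}
 {R : realType} (P : probability Omega R) (D : probability Z R) {n : nat}
 (T : 'I_n -> Omega -> Z)
 (hT : forall j, measurable_fun setT (T j))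
 (hind : forall B : 'I_n -> set Z, (forall j, measurable (B j)) ->
    P (\bigcap_(j in [set: 'I_n]) (T j @^-1` B j)) = (\prod_j P (T j @^-1` B j))%E)
 (hdist : forall j, has_distribution P (T j) D)
 (hn : (0 < n)%N) (B : set Z) (mB : measurable B) (u : R) (u0 : 0 < u) :
 (P (bad T B (n%:R * (fine (D B) + u))) <= (expR (- (2/9) * n%:R * u ^+ 2))%:E)%E.
Proof.
have [DBe /andP[q0 q1]] := @prob_fine _ _ _ D _ mB.
set q := fine (D B) in DBe q0 q1 *.
set pb := fun b : {ffun 'I_n -> bool} => \prod_j (if b j then q else 1 - q).
have hatom b : P (atom T B b) = (pb b)%:E.
  rewrite /atom hind; last by move=> j; case: (b j) => //; exact: measurableC.
  rewrite /pb -prodEFin; apply: eq_bigr => j _.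
  case: (b j).
    by rewrite hdist.
  rewrite hdist; last exact: measurableC.
  by rewrite probability_setC // DBe.
rewrite /bad.
apply: le_trans (@measure_bigsetU_le _ _ _ P _ _ _ _ (fun b => atom_measurable T B b hT mB)) _.
rewrite (eq_bigr (fun b => (pb b)%:E)); last by move=> b _; exact: hatom.
rewrite sumEFin lee_fin.
set thr := n%:R * (q + u).
have pb0 b : 0 <= pb b by apply: prodr_ge0 => j _; case: (b j) => //; lra.
have hN : 0 <= n%:R :> R by [].
have [u1|u1] := leP u 1; last first.
  rewrite big_pred0; first exact: expR_ge0.
  move=> b; apply/negbTE; rewrite -ltNge.
  have : (#|[set j | b j]| <= n)%N.
    by rewrite card_cset; apply: leq_trans (max_card _) _; rewrite card_ord.
  rewrite -(ler_nat R) => h; apply: le_lt_trans h _.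
  have [n0|n0] := eqVneq n 0%N.
    by rewrite n0 in hn.
  have hn' : 1 <= n%:R :> R by rewrite ler1n lt0n.
  rewrite /thr; nra.
set s := u / 3.
have s0 : 0 <= s <= 1/3 by apply/andP; split; rewrite /s; lra.
pose F (b : {ffun 'I_n -> bool}) := expR (s * ((#|[set j | b j]|)%:R - thr)) * pb b.
apply: (@le_trans _ _ (\sum_(b : {ffun 'I_n -> bool} | thr <= (#|[set j | b j]|)%:R) F b)).
  apply: ler_sum => b hb; rewrite /F ler_peMl //.
  apply: le_trans (expR_ge1Dx _); rewrite lerDl; apply: mulr_ge0; first lra.
  by rewrite subr_ge0.
apply: (@le_trans _ _ (\sum_(b : {ffun 'I_n -> bool}) F b)).
  rewrite [leRHS](bigID (fun b : {ffun 'I_n -> bool} => thr <= (#|[set j | b j]|)%:R)) /= lerDl.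
  apply: sumr_ge0 => b _; rewrite /F; apply: mulr_ge0 => //; exact: expR_ge0.
have hF b : F b = expR (- (s * thr)) * \prod_j (if b j then q * expR s else 1 - q).
  have hp : \prod_j (if b j then q * expR s else 1 - q) = expR s ^+ #|[set j | b j]| * pb b.
    rewrite card_cset -prodr_const /pb [in RHS]big_mkcond -big_split /=; apply: eq_bigr => j _.
    by rewrite inE; case: (b j); rewrite ?mul1r // mulrC.
  by rewrite hp /F mulrBr expRD (mulrC s) expRM_natl; ring.
under eq_bigr do rewrite hF.
rewrite -mulr_sumr.
have hd := bigA_distr_bigA (fun (j : 'I_n) (x : bool) => if x then q * expR s else 1 - q).
rewrite /= in hd.
rewrite -hd.
under eq_bigr do rewrite big_bool /=.
rewrite prod_const_ord.
have he := @expR_le_quad _ _ s0.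
have e1 : 1 <= expR s by apply: le_trans _ (expR_ge1Dx s); case/andP: s0 => ? ?; lra.
apply: (@le_trans _ _ (expR (- (s * thr)) * expR (n%:R * (q * (expR s - 1))))).
  rewrite ler_wpM2l ?expR_ge0 // expRM_natl; apply: lerXn2r; rewrite ?nnegrE.
  - nra.
  - exact: expR_ge0.
  - apply: le_trans (expR_ge1Dx _); lra.
rewrite -expRD ler_expR /thr.
have h1 : n%:R * (q * (expR s - 1)) <= n%:R * (q * (s + s ^+ 2)).
  by apply: ler_wpM2l => //; apply: ler_wpM2l => //; lra.
have h2 : n%:R * (q * s ^+ 2) <= n%:R * (s ^+ 2).
  apply: ler_wpM2l => //; rewrite -[leRHS]mul1r; apply: ler_wpM2r => //; exact: sqr_ge0.
rewrite /s in h1 h2 *.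
nra.
Qed.
Lemma part_cell {T : Type} {K : nat} {C : 'I_K -> set T} :
  is_partition C -> forall z, exists i, C i z.
Proof.
case=> _ hU z; have : [set: T] z by [].
by rewrite -hU => -[i _ Ci]; exists i.
Qed.

Lemma part_uniq {T : Type} {K : nat} {C : 'I_K -> set T} :
  is_partition C -> forall i j z, C i z -> C j z -> i = j.
Proof.
case=> hD _ i j z Ci Cj; apply/eqP; apply: contraT => ne.
have : (C i `&` C j) z by split.
by rewrite hD.
Qed.

Definition ind {T : Type} {R : realType} (z : T) (X : set T) : R :=
  if z \in X then 1 else 0.

Lemma ind_cell {T : Type} {R : realType} {K : nat} (C : 'I_K -> set T) i0 z i :
  is_partition C -> C i0 z -> ind z (C i) = (i == i0)%:R :> R.
Proof.
move=> hP Ci0; rewrite /ind; case: eqP => [->|ne]; first by rewrite mem_set.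
case: ifP => // /set_mem Ci; exfalso; apply: ne.
exact: (part_uniq hP _ _ _ Ci Ci0).
Qed.

Lemma sum_ind_A {T : Type} {R : realType} {K : nat} (C : 'I_K -> set T) (A : {set 'I_K}) z :
  is_partition C ->
  \sum_(i in A) ind z (C i) = ind z (\big[setU/set0]_(i in A) C i) :> R.
Proof.
move=> hP; have [i0 Ci0] := part_cell hP z.
transitivity (\sum_(i in A) ((i == i0)%:R : R)).
  by apply: eq_bigr => i _; exact: (ind_cell C i0 z i hP Ci0).
rewrite (big_mkcond (fun i => i \in A)) (bigD1 i0) //= eqxx big1 ?addr0; last first.
  by move=> i /negbTE ->; case: (i \in A).
rewrite /ind; case: ifP => hin; case: ifP => hz //.
  exfalso; move/negbT: hz => /negP; apply; apply: mem_set; apply/in_bigsetU.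
  by exists i0 => //; rewrite mem_index_enum.
exfalso; move/set_mem: hz => /in_bigsetU [i /andP[_ iA] Ci].
by rewrite -(part_uniq hP _ _ _ Ci Ci0) iA in hin.
Qed.

Lemma sum_ind_all {T : Type} {R : realType} {K : nat} (C : 'I_K -> set T) z :
  is_partition C -> \sum_i ind z (C i) = 1 :> R.
Proof.
move=> hP; have [i0 Ci0] := part_cell hP z.
under eq_bigr => i _ do rewrite (ind_cell C i0 z i hP Ci0).
rewrite (bigD1 i0) //= eqxx big1 ?addr0 //.
by move=> i /negbTE ->.
Qed.

Lemma card_ind {T : Type} {R : realType} n (S : 'I_n -> T) (X : set T) :
  (#|[set j | S j \in X]|)%:R = \sum_j ind (S j) X :> R.
Proof.
rewrite card_cset2 -sum1_card natr_sum big_mkcond /=; apply: eq_bigr => j _.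
by rewrite /ind inE; case: ifP.
Qed.
Lemma card_setK K : #|{set 'I_K}| = (2 ^ K)%N.
Proof.
rewrite -cardsT (_ : [set: {set 'I_K}]%SET = powerset [set: 'I_K]%SET).
  by rewrite card_powerset cardsT card_ord.
apply/setP => A; rewrite powersetE finset.subsetT.
by rewrite finset.in_setT.
Qed.

Lemma sum_constT (I : finType) (R : realType) (c : R) : \sum_(i : I) c = c *+ #|I|.
Proof. by rewrite -sumr_const; apply: eq_bigl => i; rewrite inE. Qed.

Lemma meas_CA {dZ : measure_display} {Z : measurableType dZ} {R : realType}
  (D : probability Z R) {K : nat} (C : 'I_K -> set Z)
  (hCm : forall i, measurable (C i)) (hP : is_partition C) (A : pred 'I_K) :
  D (\big[setU/set0]_(i | A i) C i) = (\sum_(i | A i) fine (D (C i)))%:E.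
Proof.
rewrite measure_bigsetU_ord_cond //; last first.
  by move=> i j _ _ [z [Ci Cj]]; exact: (part_uniq hP _ _ _ Ci Cj).
rewrite -sumEFin; apply: eq_bigr => i _.
by have [] := @prob_fine _ _ _ D _ (hCm i).
Qed.

Lemma bigsetU_all {T : Type} {K : nat} (C : 'I_K -> set T) :
  is_partition C -> \big[setU/set0]_(i < K) C i = [set: T].
Proof.
move=> hP; apply/seteqP; split => // z _; apply/in_bigsetU.
have [i Ci] := part_cell hP z; by exists i => //; rewrite mem_index_enum.
Qed.
Lemma good_event {dO dZ : measure_display} {Omega : measurableType dO} {Z : measurableType dZ}
 {R : realType} (P : probability Omega R) (D : probability Z R) {n : nat}
 (T : 'I_n -> Omega -> Z)
 (hT : forall j, measurable_fun setT (T j))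
 (hind : forall B : 'I_n -> set Z, (forall j, measurable (B j)) ->
    P (\bigcap_(j in [set: 'I_n]) (T j @^-1` B j)) = (\prod_j P (T j @^-1` B j))%E)
 (hdist : forall j, has_distribution P (T j) D)
 (hn : (0 < n)%N) {K : nat} (C : 'I_K -> set Z)
 (hCm : forall i, measurable (C i)) (hP : is_partition C) (delta : R) (hd : 0 < delta < 1) :
 exists E : set Omega, measurable E /\ (P E >= (1 - delta)%:E)%E /\
  forall w, E w -> \sum_(i < K) `| fine (D (C i)) - (ncount (fun j => T j w) (C i))%:R / n%:R |
     <= 3 * Num.sqrt ((2 * K%:R * ln 2 + 2 * ln (2 / delta)) / n%:R).
Proof.
case/andP: hd => d0 d1.
set L := 2 * K%:R * ln 2 + 2 * ln (2 / delta).
have hN : 0 < n%:R :> R by rewrite ltr0n.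
have l2 : 0 < ln 2 :> R by apply: ln_gt0; lra.
have l2d : 0 < ln (2 / delta) :> R.
  apply: ln_gt0; rewrite ltr_pdivlMr //; lra.
have L0 : 0 < L by rewrite /L; have : 0 <= K%:R :> R by []; nra.
set u := 3 / 2 * Num.sqrt (L / n%:R).
have u0 : 0 < u by rewrite /u mulr_gt0 // ?sqrtr_gt0 ?divr_gt0 //; lra.
have u2 : u ^+ 2 = 9 / 4 * (L / n%:R).
  rewrite /u exprMn sqr_sqrtr; last by rewrite divr_ge0 // ltW.
  by congr (_ * _); rewrite expr2; field.
pose CA (A : {set 'I_K}) := \big[setU/set0]_(i in A) C i.
have CAm A : measurable (CA A) by apply: bigsetU_measurable.
pose badA A := bad T (CA A) (n%:R * (fine (D (CA A)) + u)).
have badAm A : measurable (badA A) by apply: bad_measurable.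
pose BAD := \big[setU/set0]_(A : {set 'I_K}) badA A.
have BADm : measurable BAD by apply: bigsetU_measurable.
exists (~` BAD); split; first exact: measurableC.
split.
  rewrite probability_setC //.
  have hB : (P BAD <= delta%:E)%E.
    apply: le_trans (@measure_bigsetU_le _ _ _ P _ _ _ _ badAm) _.
    apply: (@le_trans _ _ (\sum_(A : {set 'I_K}) (expR (- (2/9) * n%:R * u ^+ 2))%:E)).
      by apply: lee_sum => A _; exact: bad_prob.
    rewrite sumEFin lee_fin sum_constT card_setK u2.
    have -> : - (2 / 9) * n%:R * (9 / 4 * (L / n%:R)) = - (K%:R * ln 2) - ln (2 / delta).
      by rewrite /L; field; rewrite gt_eqF.
    rewrite expRD expRN expRM_natl lnK ?posrE // expRN lnK ?posrE ?divr_gt0 //.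
    rewrite -[X in X <= _]mulr_natr natrX.
    have h2K : 0 < 2 ^+ K :> R by rewrite exprn_gt0.
    have -> : 2 ^- K / (2 / delta) * 2 ^+ K = delta / 2 :> R.
      by field; rewrite ?gt_eqF.
    lra.
  have [e /andP[h0 h1]] := @prob_fine _ _ _ P _ BADm.
  rewrite e in hB *; rewrite lee_fin in hB; rewrite -EFinB lee_fin; lra.
move=> w /= hw.
pose p := fun i => fine (D (C i)).
pose h := fun i : 'I_K => (ncount (fun j => T j w) (C i))%:R / n%:R :> R.
have hcnt A : \sum_j ind (T j w) (CA A) = \sum_(i in A) (ncount (fun j => T j w) (C i))%:R :> R.
  transitivity (\sum_j \sum_(i in A) ind (T j w) (C i) :> R).
    by apply: eq_bigr => j _; rewrite (sum_ind_A C A (T j w) hP).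
  by rewrite exchange_big; apply: eq_bigr => i _; rewrite /ncount card_ind.
have hA : forall A : {set 'I_K}, \sum_(i in A) (h i - p i) < u.
  move=> A.
  have nb : ~ badA A w.
    by move=> b; apply: hw; apply/in_bigsetU; exists A => //; rewrite mem_index_enum.
  have hc : (#|[set j | T j w \in CA A]|)%:R < n%:R * (fine (D (CA A)) + u) :> R.
    rewrite ltNge; apply/negP => hle; apply: nb; exact: in_bad.
  rewrite card_ind hcnt in hc.
  have e2 : fine (D (CA A)) = \sum_(i in A) p i by rewrite /CA meas_CA.
  rewrite e2 in hc.
  rewrite sumrB /h -mulr_suml.
  have : (\sum_(i in A) (ncount (fun j => T j w) (C i))%:R) / n%:R < \sum_(i in A) p i + u.
    by rewrite ltr_pdivrMr // mulrC.
  lra.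
have hsum : \sum_i (h i - p i) = 0.
  have hh : \sum_i h i = 1.
    rewrite /h -mulr_suml.
    have -> : \sum_i (ncount (fun j => T j w) (C i))%:R = n%:R :> R.
      transitivity (\sum_i \sum_j ind (T j w) (C i) :> R).
        by apply: eq_bigr => i _; rewrite /ncount card_ind.
      rewrite exchange_big /=.
      under eq_bigr do rewrite (sum_ind_all C (T _ w) hP).
      by rewrite sum_constT card_ord.
    by rewrite divff // gt_eqF.
  have hp : \sum_i p i = 1.
    have := meas_CA D C hCm hP predT.
    rewrite bigsetU_all // probability_setT => /eqP.
    by rewrite eqe => /eqP ->.
  by rewrite sumrB hh hp subrr.
pose Astar := [set i | p i < h i]%SET.
have key : \sum_i `|p i - h i| = 2 * \sum_(i in Astar) (h i - p i) - \sum_i (h i - p i).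
  rewrite (big_mkcond (fun i => i \in Astar)) mulr_sumr -sumrB; apply: eq_bigr => i _; rewrite inE.
  case: ltP => hi.
    by rewrite distrC ger0_norm ?subr_ge0 ?ltW //; ring.
  rewrite ger0_norm ?subr_ge0 //; ring.
change (\sum_i `|p i - h i| <= 3 * Num.sqrt (L / n%:R)).
rewrite key hsum subr0.
have := hA Astar.
rewrite /u; lra.
Qed.
Lemma eps_ge0 {T : Type} {R : realType} {n K : nat} (hn : (0 < n)%N)
  (C : 'I_K -> set T) (S : 'I_n -> T) (l : T -> R) (eps : R) :
  is_partition C ->
  (forall j z i, C i (S j) -> C i z -> `|l (S j) - l z| <= eps) -> 0 <= eps.
Proof.
move=> hP hr; have [i Ci] := part_cell hP (S (Ordinal hn)).
by have := hr (Ordinal hn) _ _ Ci Ci; rewrite subrr normr0.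
Qed.

Lemma det_bound {dZ : measure_display} {Z : measurableType dZ} {R : realType}
 (D : probability Z R) (l : Z -> R) (M : R)
 (hlm : measurable_fun setT l) (hl : forall z, 0 <= l z <= M)
 {n : nat} (hn : (0 < n)%N) (S : 'I_n -> Z) {K : nat} (C : 'I_K -> set Z)
 (hCm : forall i, measurable (C i)) (hP : is_partition C) (eps : R)
 (hrob : forall j z i, C i (S j) -> C i z -> `|l (S j) - l z| <= eps) :
 (\int[D]_z (l z)%:E <= (emp_risk l S + eps
     + M * \sum_(i < K) `|fine (D (C i)) - (ncount S (C i))%:R / n%:R|)%:E)%E.
Proof.
have eps0 := eps_ge0 hn _ _ _ _ hP hrob.
have M0 : 0 <= M by case/andP: (hl (S (Ordinal hn))) => a b; apply: le_trans b.
pose p i := fine (D (C i)).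
pose ns i := (ncount S (C i))%:R : R.
pose c i := \sum_j ind (S j) (C i) * l (S j).
have hns i : ns i = \sum_j ind (S j) (C i) by rewrite /ns /ncount card_ind.
have ind01 (z : Z) (X : set Z) : @ind _ R z X = 0 \/ @ind _ R z X = 1.
  by rewrite /ind; case: ifP; [right|left].
have hp0 i : 0 <= p i by have [_ /andP[]] := @prob_fine _ _ _ D _ (hCm i).
have hpe i : D (C i) = (p i)%:E by have [] := @prob_fine _ _ _ D _ (hCm i).
have hpsum : \sum_i p i = 1.
  have := meas_CA D C hCm hP predT.
  rewrite bigsetU_all // probability_setT => /eqP.
  by rewrite eqe => /eqP ->.
have hc0 i : 0 <= c i.
  apply: sumr_ge0 => j _; apply: mulr_ge0; last by case/andP: (hl (S j)).
  by case: (ind01 (S j) (C i)) => ->.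
have hcM i : c i <= M * ns i.
  rewrite hns mulr_sumr; apply: ler_sum => j _; rewrite mulrC.
  apply: ler_wpM2r; first by case: (ind01 (S j) (C i)) => ->.
  by case/andP: (hl (S j)).
pose g i := if ns i == 0 then M else c i / ns i + eps.
have hg i z : C i z -> l z <= g i.
  move=> Ciz; rewrite /g; case: eqP => [_|ne]; first by case/andP: (hl z).
  have nsp : 0 < ns i.
    by rewrite lt_def; apply/andP; split; [apply/eqP|rewrite /ns].
  rewrite -lerBlDr ler_pdivlMr // mulrBl lerBlDr.
  rewrite hns mulr_sumr mulr_sumr /c -big_split /=; apply: ler_sum => j _.
  case: (ind01 (S j) (C i)) => hij; rewrite hij ?mul0r ?mulr0 ?addr0 // ?mul1r ?mulr1.
  have Cij : C i (S j) by move: hij; rewrite /ind; case: ifP => [/set_mem //|_ /eqP]; rewrite eq_sym oner_eq0.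
  have := hrob j z i Cij Ciz; rewrite ler_norml => /andP[h1 h2]; lra.
have hg0 i : 0 <= g i.
  rewrite /g; case: eqP => // ne; apply: addr_ge0 => //; apply: divr_ge0 => //; rewrite /ns //.
apply: (@le_trans _ _ (\sum_i (g i * p i)%:E)).
  rewrite -(bigsetU_all C hP) integral_bigsetU_EFin //; last 3 first.
  - exact: index_enum_uniq.
  - by move=> i j _ _ [z [Ci Cj]]; exact: (part_uniq hP _ _ _ Ci Cj).
  - by apply/measurable_realfun.measurable_EFinP; exact: measurable_funTS.
  apply: lee_sum => i _.
  apply: (@le_trans _ _ (\int[D]_(x in C i) cst (g i)%:E x)%E).
    apply: ge0_le_integral => //.
    - by move=> z _; rewrite lee_fin; case/andP: (hl z).
    - by apply/measurable_realfun.measurable_EFinP; exact: measurable_funTS.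
    - by move=> z Ciz; rewrite lee_fin; exact: hg.
  rewrite integral_cst //.
  have := hpe i; rewrite /= => e; rewrite [X in (_ * X)%E]e; done.
rewrite sumEFin lee_fin.
have hemp : emp_risk l S = \sum_i c i / n%:R.
  rewrite /emp_risk -mulr_suml; congr (_ / _); rewrite /c exchange_big /=.
  by apply: eq_bigr => j _; rewrite -mulr_suml sum_ind_all // mul1r.
rewrite hemp.
have hN : 0 < n%:R :> R by rewrite ltr0n.
apply: (@le_trans _ _ (\sum_i (c i / n%:R + eps * p i + M * `|p i - ns i / n%:R|))).
  apply: ler_sum => i _; rewrite /g; case: eqP => [h0|ne].
    have ci0 : c i = 0 by apply/eqP; rewrite eq_le hc0 andbT; have := hcM i; rewrite h0 mulr0.
    rewrite ci0 h0 mul0r subr0 ger0_norm //.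
    have := mulr_ge0 eps0 (hp0 i); lra.
  have nsp : 0 < ns i.
    by rewrite lt_def; apply/andP; split; [apply/eqP|rewrite /ns].
  set a := c i / ns i.
  have a0 : 0 <= a by rewrite /a divr_ge0 // ltW.
  have aM : a <= M by rewrite /a ler_pdivrMr.
  have ec : c i / n%:R = a * (ns i / n%:R).
    rewrite /a; field; apply/andP; split; rewrite gt_eqF //.
  have h1 : a * (p i - ns i / n%:R) <= M * `|p i - ns i / n%:R|.
    apply: le_trans (ler_wpM2l a0 (ler_norm _)) _.
    by apply: ler_wpM2r => //; rewrite normr_ge0.
  rewrite ec; lra.
rewrite !big_split /= -!mulr_sumr hpsum mulr1.
by rewrite -!mulr_suml.
Qed.
Theorem theorem1 (R : realType)
  (dO : measure_display) (Omega : measurableType dO) (P : probability Omega R)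
  (dX dY : measure_display) (X : measurableType dX) (Y : measurableType dY)
  (Theta : Type) (f : Theta -> X -> R) (loss : R -> Y -> R) (M : R)
  (hloss_meas : forall th : Theta,
     measurable_fun [set: X * Y] (fun z : X * Y => loss (f th z.1) z.2))
  (hloss_bd : forall (th : Theta) (z : X * Y),
     0 <= loss (f th z.1) z.2 <= M)
  (DS DT : probability (X * Y)%type R)
  (n : nat) (hn : (0 < n)%N)
  (Ssamp Tsamp : 'I_n -> Omega -> (X * Y)%type)
  (hindep : mutually_independent P
     (fun k : ('I_n + 'I_n)%type =>
        match k with inl j => Ssamp j | inr j => Tsamp j end))
  (hSdist : forall j, has_distribution P (Ssamp j) DS)
  (hTdist : forall j, has_distribution P (Tsamp j) DT)
  (K : nat) (C : 'I_K -> set (X * Y)%type)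
  (hC_meas : forall i, measurable (C i)) (hC_part : is_partition C)
  (delta : R) (hdelta : 0 < delta < 1) :
  exists E : set Omega, measurable E /\ (P E >= (1 - delta)%:E)%E /\
    forall w, E w ->
    forall (th : Theta) (eps : R),
      robust_wrt C (fun j => Ssamp j w) (fun z => loss (f th z.1) z.2) eps ->
      (\int[DT]_z (loss (f th z.1) z.2)%:E <=
        (emp_risk (fun z => loss (f th z.1) z.2) (fun j => Ssamp j w)
         + M * dist_eK C (fun j => Ssamp j w) (fun j => Tsamp j w)
         + 2 * eps
         + 3 * M * Num.sqrt ((2 * K%:R * ln 2 + 2 * ln (2 / delta)) / n%:R))%:E)%E.

Proof.
have hT j : measurable_fun setT (Tsamp j) by exact: (hindep.1 (inr j)).
have hind : forall B : 'I_n -> set (X * Y)%type, (forall j, measurable (B j)) ->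
    P (\bigcap_(j in [set: 'I_n]) (Tsamp j @^-1` B j)) = (\prod_j P (Tsamp j @^-1` B j))%E.
  move=> B mB.
  pose B' := fun k : ('I_n + 'I_n)%type => match k with inl _ => [set: (X * Y)%type] | inr j => B j end.
  have mB' : forall k, measurable (B' k) by case=> [j|j]; [exact: measurableT|exact: mB].
  have := hindep.2 B' mB'.
  have -> : \bigcap_(k in [set: ('I_n + 'I_n)%type])
      ((match k with inl j => Ssamp j | inr j => Tsamp j end) @^-1` B' k)
      = \bigcap_(j in [set: 'I_n]) (Tsamp j @^-1` B j).
    apply/seteqP; split => w hw.
      by move=> j _; exact: (hw (inr j)).
    by case=> [j|j] _ //=; exact: hw.
  move=> ->; rewrite big_sumType /= big1 ?mul1e // => j _.
  by rewrite preimage_setT probability_setT.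
have [E [mE [PE hE]]] := good_event P DT Tsamp hT hind hTdist hn C hC_meas hC_part delta hdelta.
exists E; split => //; split => // w Ew th eps [hP' hrob].
have hl : forall z, 0 <= (fun z : (X * Y)%type => loss (f th z.1) z.2) z <= M by move=> z; exact: hloss_bd.
apply: le_trans (det_bound DT _ M (hloss_meas th) hl hn (fun j => Ssamp j w) C hC_meas hC_part eps hrob) _.
rewrite lee_fin.
have eps0 := eps_ge0 hn _ _ _ _ hC_part hrob.
have M0 : 0 <= M by case/andP: (hl (Ssamp (Ordinal hn) w)) => a b; apply: le_trans b.
have hT' := hE w Ew.
set pS := \sum_(i < K) `|fine (DT (C i)) - (ncount (fun j => Ssamp j w) (C i))%:R / n%:R|.
set pT := \sum_(i < K) `|fine (DT (C i)) - (ncount (fun j => Tsamp j w) (C i))%:R / n%:R| in hT'.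
set dd := dist_eK C (fun j => Ssamp j w) (fun j => Tsamp j w).
have tri : pS <= dd + pT.
  rewrite /pS /pT /dd /dist_eK -big_split; apply: ler_sum => i _.
  apply: le_trans (ler_distD ((ncount (fun j => Tsamp j w) (C i))%:R / n%:R) _ _) _.
  by rewrite addrC distrC.
have h1 := ler_wpM2l M0 tri.
have h2 := ler_wpM2l M0 hT'.
set sq := Num.sqrt _ in h2 *.
have : M * (dd + pT) = M * dd + M * pT by ring.
have : M * (3 * sq) = 3 * M * sq by ring.
lra.
Qed.
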